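(* Let $B$ be a complete Boolean algebra, let $X$ and $Y$ be CFG-spaces over $B$, let $U\subset X$ and $V\subset Y$ be arbitrary nonempty subsets, and let $f:U\to V$ be a contractive map. Then there is a unique contractive map $\mathrm{Conv}(f):\mathrm{Conv}(U)\to\mathrm{Conv}(V)$ extending $f$. Moreover, if $f$ is an isometry, then $\mathrm{Conv}(f)$ is an isometry.
   Context: A Boolean metric space over $B$ is a set with symmetric $d$ into $B$, $d(x,y)=0$ iff $x=y$, $d(x,z)\le d(x,y)\vee d(y,z)$. Contractive: $d(f(x),f(y))\le d(x,y)$; isometry: bijection preserving $d$. A partition of $B$ is a finite family of pairwise disjoint elements with supremum $1$; $x$ is a convex combination of $x_0,\dots,x_n$ with coefficients a partition $a_0,\dots,a_n$ if $a_i\wedge d(x,x_i)=0$ for all $i$. A CFG-space is a Boolean metric space that is convex (every such convex combination of its points exists in it) and finitely generated (some finite subset $S$ has every point as a convex combination of points of $S$). For $U$ a subset of a CFG-space $X$ over a complete $B$, $\mathrm{Conv}(U)$ denotes the intersection of all subsets of $X$ containing $U$ that are CFG-spaces with the restricted metric; it is itself the least such CFG-subspace containing $U$. *)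

(* Defs.v *)
(* a Boolean algebra is a ctbDistrLatticeType
   (complemented distributive lattice with top and bottom). *)
From HB Require Import structures.
From Stdlib Require List.
From mathcomp Require Import all_boot all_order.
Set Implicit Arguments. Unset Strict Implicit. Unset Printing Implicit Defensive.
Import Order.TTheory.
Local Open Scope order_scope.

Section BoolMetric.
Context {disp : Order.disp_t} {B : ctbDistrLatticeType disp}.

Definition complete_BA : Prop :=
  forall P : B -> Prop, exists s : B,
    (forall b, P b -> b <= s) /\ (forall t, (forall b, P b -> b <= t) -> s <= t).

Context {X : Type}.

Definition bmetric (A : X -> Prop) (d : X -> X -> B) : Prop :=
  (forall x y, A x -> A y -> d x y = d y x) /\
  (forall x y, A x -> A y -> (d x y = \bot <-> x = y)) /\
  (forall x y z, A x -> A y -> A z -> d x z <= d x y `|` d y z).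

Definition partition_B (n : nat) (a : 'I_n -> B) : Prop :=
  (forall i j : 'I_n, i <> j -> a i `&` a j = \bot) /\
  \join_(i < n) a i = \top.

(* x is the convex combination of xs with coefficients a *)
Definition convcomb (d : X -> X -> B) (x : X) (n : nat)
  (xs : 'I_n -> X) (a : 'I_n -> B) : Prop :=
  forall i, a i `&` d x (xs i) = \bot.

Definition convex (A : X -> Prop) (d : X -> X -> B) : Prop :=
  forall (n : nat) (xs : 'I_n -> X) (a : 'I_n -> B),
    partition_B a -> (forall i, A (xs i)) ->
    exists x, A x /\ convcomb d x xs a.

Definition fin_generated (A : X -> Prop) (d : X -> X -> B) : Prop :=
  exists S : seq X, (forall s, List.In s S -> A s) /\
    forall x, A x -> exists (m : nat) (ys : 'I_m -> X) (a : 'I_m -> B),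
      (forall j, List.In (ys j) S) /\ partition_B a /\ convcomb d x ys a.

Definition CFG (A : X -> Prop) (d : X -> X -> B) : Prop :=
  bmetric A d /\ convex A d /\ fin_generated A d.

Definition Conv (A : X -> Prop) (d : X -> X -> B) (U : X -> Prop) : X -> Prop :=
  fun x => forall W : X -> Prop,
    (forall y, W y -> A y) -> (forall y, U y -> W y) -> CFG W d -> W x.

End BoolMetric.

Section Maps.
Context {disp : Order.disp_t} {B : ctbDistrLatticeType disp} {X Y : Type}.

Definition maps_into (f : X -> Y) (U : X -> Prop) (V : Y -> Prop) : Prop :=
  forall x, U x -> V (f x).

Definition contractive (dX : X -> X -> B) (dY : Y -> Y -> B)
  (f : X -> Y) (U : X -> Prop) : Prop :=
  forall x y, U x -> U y -> (dY (f x) (f y) <= dX x y)%O.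

Definition isometry (dX : X -> X -> B) (dY : Y -> Y -> B)
  (f : X -> Y) (U : X -> Prop) (V : Y -> Prop) : Prop :=
  maps_into f U V /\
  (forall x y, U x -> U y -> f x = f y -> x = y) /\
  (forall v, V v -> exists u, U u /\ f u = v) /\
  (forall x y, U x -> U y -> dY (f x) (f y) = dX x y).

End Maps.

(* Main.v *)
Require Import Defs.
From HB Require Import structures.
From Stdlib Require Import Classical ClassicalEpsilon.
From Stdlib Require List.
From mathcomp Require Import all_boot all_order.
Set Implicit Arguments. Unset Strict Implicit. Unset Printing Implicit Defensive.
Import Order.Theory.
Local Open Scope order_scope.

Section L.
Context {disp : Order.disp_t} {B : ctbDistrLatticeType disp}.
Implicit Types a b c t : B.

Lemma dis_le a b : a `&` b = \bot <-> a <= ~` b.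
Proof. by rewrite -disj_leC; split => [->|/eqP]. Qed.
Lemma avU a b c : a <= ~` b -> a <= ~` c -> a <= ~` (b `|` c).
Proof. by rewrite complU lexI => -> ->. Qed.
Lemma av_le a b c : a <= ~` b -> c <= b -> a <= ~` c.
Proof. by move=> h1 h2; apply: le_trans h1 _; rewrite leC. Qed.
Lemma avI a b c : (a <= ~` (b `&` c)) = (a `&` b <= ~` c).
Proof. by rewrite -!disj_leC meetA. Qed.
Lemma avS a b : a <= ~` b -> b <= ~` a.
Proof. by rewrite lexC. Qed.
Lemma top_av t : \top <= ~` t -> t = \bot.
Proof.
move=> h; have e : ~` t = \top by apply/le_anti; rewrite h lex1.
by rewrite -(complK t) e compl1.
Qed.
Lemma av_bot_eq t : ~` \bot <= ~` t -> t = \bot.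
Proof. by rewrite compl0; exact: top_av. Qed.
Lemma le_av_meet a b c : a <= ~` c -> a `&` b <= ~` c.
Proof. by move=> h; apply: le_trans h; exact: leIl. Qed.
Lemma av_meetr a b c : b <= ~` c -> a `&` b <= ~` c.
Proof. by move=> h; apply: le_trans h; exact: leIr. Qed.
Lemma le_of_av a b : a `&` ~` b = \bot -> a <= b.
Proof. by move/dis_le; rewrite complK. Qed.
End L.
Section G.
Context {disp : Order.disp_t} {B : ctbDistrLatticeType disp} {X : Type}.
Implicit Types (A : X -> Prop) (d : X -> X -> B).

Lemma bm_sym A d x y : bmetric A d -> A x -> A y -> d x y = d y x.
Proof. by case=> h _; apply: h. Qed.
Lemma bm_zero A d x : bmetric A d -> A x -> d x x = \bot.
Proof. by case=> _ [h _] Ax; apply/(proj2 (h _ _ Ax Ax)). Qed.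
Lemma bm_eq A d x y : bmetric A d -> A x -> A y -> d x y = \bot -> x = y.
Proof. by case=> _ [h _] Ax Ay; apply/(proj1 (h _ _ Ax Ay)). Qed.
Lemma bm_tri A d x y z : bmetric A d -> A x -> A y -> A z ->
  d x z <= d x y `|` d y z.
Proof. by case=> _ [_ h]; apply: h. Qed.
Lemma av_tri A d x y z (a : B) : bmetric A d -> A x -> A y -> A z ->
  a <= ~` d x y -> a <= ~` d y z -> a <= ~` d x z.
Proof.
move=> bm Ax Ay Az h1 h2; apply: av_le (avU h1 h2) _; exact: bm_tri bm Ax Ay Az.
Qed.

Lemma in_nth (s : seq X) x0 i : (i < size s)%N -> List.In (nth x0 s i) s.
Proof.
elim: s i => [//|z s IH] [|i] /= h; first by left.
by right; apply: IH.
Qed.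
Lemma In_idx (s : seq X) z : List.In z s -> exists2 i, (i < size s)%N & nth z s i = z.
Proof.
elim: s => [//|y s IH] /= [->|/IH [i h1 h2]]; first by exists 0%N.
by exists i.+1.
Qed.

Variable Hc : complete_BA (B := B).
Definition supB (P : B -> Prop) : B :=
  proj1_sig (constructive_indefinite_description _ (Hc P)).
Lemma sup_ub P b : P b -> b <= supB P.
Proof.
rewrite /supB; case: (constructive_indefinite_description _ _) => s [h _] /=.
exact: h.
Qed.
Lemma sup_least P t : (forall b, P b -> b <= t) -> supB P <= t.
Proof.
rewrite /supB; case: (constructive_indefinite_description _ _) => s [_ h] /=.
exact: h.
Qed.

Lemma glue W d (I : Type) (P : I -> Prop) (c : I -> B) (x : I -> X) :
  CFG W d -> (forall i, P i -> W (x i)) ->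
  (forall i j, P i -> P j -> c i `&` c j <= ~` d (x i) (x j)) ->
  (forall t, (forall i, P i -> c i <= ~` t) -> t = \bot) ->
  exists y, W y /\ forall i, P i -> c i <= ~` d y (x i).
Proof.
move=> [Hbm [Hconv [S [HS Hgen]]]] Pmem Hcons Hcov.
pose n := size S.
pose w (k : 'I_n) := tnth (in_tuple S) k.
have wS k : List.In (w k) S.
  by rewrite /w (tnth_nth (tnth (in_tuple S) k)) /=; apply: in_nth; exact: ltn_ord.
have Sw z : List.In z S -> exists k, w k = z.
  by case/In_idx => i lt e; exists (Ordinal lt); rewrite /w (tnth_nth z).
have Ww k : W (w k) by apply: HS.
pose E k b := exists i m (ys : 'I_m -> X) (a : 'I_m -> B) l,
  P i /\ convcomb d (x i) ys a /\ ys l = w k /\ b = c i `&` a l.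
pose e k := supB (E k).
pose e' (k : 'I_n) := e k `&` \meet_(l < n | (l < k)%N) ~` e l.
have cov_e : forall t, (forall k, e k <= ~` t) -> t = \bot.
  move=> t ht; apply: Hcov => i Pi.
  have [m [ys [a [ysS [[_ ja] cc]]]]] := Hgen _ (Pmem _ Pi).
  have : c i `&` t = \bot.
    apply: top_av; rewrite -ja; apply: joins_le => l _.
    case: (Sw _ (ysS l)) => k wk.
    rewrite lexC meetC -avI lexC.
    apply: le_trans (ht k).
    apply: sup_ub; exists i, m, ys, a, l; split => //.
  by move/dis_le.
have cov_e' : forall t, (forall k, e' k <= ~` t) -> t = \bot.
  move=> t ht; apply: cov_e.
  suff H : forall j : nat, forall k : 'I_n, (k < j)%N -> e k <= ~` t.
    by move=> k; apply: (H k.+1).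
  elim=> [//|j IH] k hk.
  set M := \meet_(l < n | (l < k)%N) ~` e l.
  rewrite -[e k]meetx1 -(joinxC M) meetUr leUx; apply/andP; split.
    exact: ht.
  apply: le_trans (leIr _ _) _.
  rewrite /M compl_meets; apply: joins_le => l hl; rewrite complK.
  apply: IH; exact: leq_trans hl hk.
have part : partition_B e'.
  split.
    move=> i j neq.
    have key : forall i j : 'I_n, (i < j)%N -> e' i `&` e' j = \bot.
      move=> i0 j0 h; apply/dis_le.
      apply: le_trans (leIl _ _) _; rewrite lexC.
      apply: le_trans (leIr _ _) _.
      exact: (@meets_inf _ _ _ i0 (fun l : 'I_n => (l < j0)%N) (fun l => ~` e l)).
    case: (ltngtP i j) => h.
    - exact: key.
    - by rewrite meetC; apply: key.
    - by exfalso; apply: neq; apply: val_inj.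
  have e0 : ~` (\join_(k < n) e' k) = \bot.
    apply: cov_e' => k; rewrite complK.
    exact: (@joins_sup _ _ _ k xpredT e').
  by rewrite -(complK (\join_(k < n) e' k)) e0 compl0.
have [y [Wy Hy]] := Hconv n w e' part Ww.
exists y; split => // i Pi.
have : c i `&` d y (x i) = \bot.
  apply: cov_e' => k; rewrite avI.
  have h1 : e' k <= ~` d y (w k) by apply/dis_le; exact: Hy.
  have h2 : e' k `&` c i <= ~` d (w k) (x i).
    rewrite -avI; apply: le_trans (leIl _ _) _.
    apply: sup_least => b [j [m [ys [a [l [Pj [cc [yl ->]]]]]]]].
    rewrite avI.
    apply: (av_tri (y := x j) Hbm (Ww k) (Pmem _ Pj) (Pmem _ Pi)).
      apply: le_trans (leIl _ _) _; apply: le_trans (leIr _ _) _.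
      have := cc l; rewrite yl => /dis_le.
      by rewrite (bm_sym Hbm (Pmem _ Pj) (Ww k)).
    rewrite meetC meetA; apply: le_trans (leIl _ _) _.
    rewrite (bm_sym Hbm (Pmem _ Pj) (Pmem _ Pi)); exact: Hcons.
  apply: (av_tri (y := w k) Hbm Wy (Ww k) (Pmem _ Pi)) => //.
  exact: le_av_meet.
by move/dis_le.
Qed.
End G.
Section C.
Context {disp : Order.disp_t} {B : ctbDistrLatticeType disp} {X : Type}.
Implicit Types (A : X -> Prop) (d : X -> X -> B).
Variable Hc : complete_BA (B := B).

Definition Kc A d (U : X -> Prop) x :=
  A x /\ forall t, (forall u, U u -> ~` d x u <= ~` t) -> t = \bot.

Lemma U_K A d U u : bmetric A d -> (forall y, U y -> A y) -> U u -> Kc A d U u.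
Proof.
move=> bm UA Uu; split; first exact: UA.
move=> t ht; apply: av_bot_eq; rewrite -(bm_zero bm (UA _ Uu)); exact: ht.
Qed.

Lemma K_sub_W A d U W x : CFG A d -> (forall y, W y -> A y) ->
  (forall y, U y -> W y) -> CFG W d -> Kc A d U x -> W x.
Proof.
move=> [bm _] WA UW cW [Ax Kx].
have UA u : U u -> A u by move=> h; apply/WA/UW.
have [y [Wy Hy]] := glue Hc (P := U) (c := fun u => ~` d x u) (x := id) cW UW
  (fun u v Uu Uv => av_tri (y := x) bm (UA _ Uu) Ax (UA _ Uv)
     (le_av_meet _ (eq_ind _ (fun z => ~` d x u <= ~` z) (lexx _) _ (bm_sym bm Ax (UA _ Uu))))
     (av_meetr _ (lexx _))) Kx.
suff -> : x = y by [].
apply: (bm_eq bm Ax (WA _ Wy)); apply: Kx => u Uu.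
apply: (av_tri (y := u) bm Ax (UA _ Uu) (WA _ Wy)) => //.
by rewrite (bm_sym bm (UA _ Uu) (WA _ Wy)); exact: Hy.
Qed.

Lemma K_CFG A d U : CFG A d -> (forall y, U y -> A y) -> (exists u, U u) ->
  CFG (Kc A d U) d.
Proof.
move=> cA UA [u0 Uu0]; have [bm [cvA [S [HS Hgen]]]] := cA.
split; [|split].
- split; [|split].
  + by move=> x y [Ax _] [Ay _]; exact: bm_sym bm Ax Ay.
  + by move=> x y [Ax _] [Ay _]; case: bm => _ [h _]; exact: h.
  + by move=> x y z [Ax _] [Ay _] [Az _]; exact: bm_tri bm Ax Ay Az.
- move=> n xs a [pd pj] hxs.
  have [x [Ax cc]] := cvA n xs a (conj pd pj) (fun i => proj1 (hxs i)).
  exists x; split => //; split => // t ht.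
  apply: top_av; rewrite -pj; apply: joins_le => i _.
  have [Axi Ki] := hxs i.
  have : a i `&` t = \bot.
    apply: Ki => u Uu; rewrite avI meetC.
    apply: le_trans (ht u Uu).
    apply: (av_tri (y := xs i) bm Ax Axi (UA _ Uu)).
      by apply: le_av_meet; apply/dis_le; exact: cc.
    exact: av_meetr.
  by move/dis_le.
- pose M s := ~` supB Hc (fun b => exists u, U u /\ b = ~` d s u).
  have Mle s u : U u -> M s <= d s u.
    by move=> Uu; rewrite /M leCx; apply: sup_ub; exists u.
  have cover_opt s t : (forall u, U u -> ~` d s u <= ~` t) -> M s <= ~` t -> t = \bot.
    move=> h1 h2; apply: top_av.
    rewrite -(joinxC (supB Hc (fun b => exists u, U u /\ b = ~` d s u))) leUx h2 andbT.
    by apply: sup_least => b [u [Uu ->]]; exact: h1.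
  have PM : forall o : option X, (fun o => match o with Some u => U u | None => True end) o ->
      A ((fun o => match o with Some u => u | None => u0 end) o).
    by case=> [u|] //=; [apply: UA | move=> _; apply: UA].
  have CO s : A s -> forall i j : option X,
      (fun o => match o with Some u => U u | None => True end) i ->
      (fun o => match o with Some u => U u | None => True end) j ->
      (fun o => match o with Some u => ~` d s u | None => M s end) i `&`
      (fun o => match o with Some u => ~` d s u | None => M s end) j <=
      ~` d ((fun o => match o with Some u => u | None => u0 end) i)
           ((fun o => match o with Some u => u | None => u0 end) j).
    move=> As.
    have dis u : U u -> ~` d s u `&` M s = \bot.
      by move=> Uu; apply/dis_le; rewrite lexC complK; exact: Mle.
    case=> [u|] [v|] //= Pu Pv.
    * apply: (av_tri (y := s) bm (UA _ Pu) As (UA _ Pv)).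
        by apply: le_av_meet; rewrite (bm_sym bm (UA _ Pu) As).
      exact: av_meetr.
    * by rewrite dis // le0x.
    * by rewrite meetC dis // le0x.
    * by rewrite (bm_zero bm (UA _ Uu0)) compl0 lex1.
  have CV s : forall t,
      (forall i : option X, (fun o => match o with Some u => U u | None => True end) i ->
        (fun o => match o with Some u => ~` d s u | None => M s end) i <= ~` t) -> t = \bot.
    move=> t ht; apply: (cover_opt s) => [u Uu|]; first exact: (ht (Some u)).
    exact: (ht None).
  have pex s : exists p, A s -> A p /\ (forall u, U u -> ~` d s u <= ~` d p u)
                               /\ M s <= ~` d p u0.
    case: (classic (A s)) => As; last by exists s.
    have [y [Ay Hy]] := glue Hc
      (P := fun o => match o with Some u => U u | None => True end)
      (c := fun o => match o with Some u => ~` d s u | None => M s end)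
      (x := fun o => match o with Some u => u | None => u0 end) cA
      PM (CO s As) (CV s).
    exists y => _; split => //; split.
      by move=> u Uu; exact: (Hy (Some u)).
    exact: (Hy None).
  pose p s := proj1_sig (constructive_indefinite_description _ (pex s)).
  have pP s : A s -> A (p s) /\ (forall u, U u -> ~` d s u <= ~` d (p s) u)
                               /\ M s <= ~` d (p s) u0.
    by rewrite /p; case: (constructive_indefinite_description _ _).
  exists (List.map p S); split.
    move=> s' /List.in_map_iff [s [<- sS]].
    have As := HS _ sS; have [Ap [h1 h2]] := pP s As.
    split => // t ht; apply: (cover_opt s) => [u Uu|].
      exact: le_trans (h1 u Uu) (ht u Uu).
    exact: le_trans h2 (ht u0 Uu0).
  move=> x [Ax Kx].
  have [m [ys [a [ysS [part cc]]]]] := Hgen x Ax.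
  exists m, (fun j => p (ys j)), a; split; first by move=> j; apply: List.in_map.
  split => // j; apply/dis_le.
  have As := HS _ (ysS j); have [Ap [h1 h2]] := pP _ As.
  have ax : a j <= ~` d x (ys j) by apply/dis_le; exact: cc.
  apply: (av_tri (y := ys j) bm Ax As Ap) => //.
  have : a j `&` d (ys j) (p (ys j)) = \bot.
    apply: (cover_opt (ys j)) => [u Uu|].
      apply: le_trans (_ : ~` d (ys j) (p (ys j)) <= _); last by rewrite leC leIr.
      apply: (av_tri (y := u) bm As (UA _ Uu) Ap) => //.
      by rewrite (bm_sym bm (UA _ Uu) Ap); exact: h1.
    have : a j `&` M (ys j) = \bot.
      apply: Kx => u Uu; rewrite avI lexC.
      apply: le_trans (Mle _ _ Uu) _; rewrite lexC.
      apply: (av_tri (y := x) bm As Ax (UA _ Uu)).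
        by apply: av_meetr; rewrite (bm_sym bm As Ax).
      exact: le_av_meet.
    move/dis_le; rewrite lexC => h; apply: le_trans h _; by rewrite leC leIl.
  by move/dis_le.
Qed.

Lemma Conv_iff A d U x : CFG A d -> (forall y, U y -> A y) -> (exists u, U u) ->
  Conv A d U x <-> Kc A d U x.
Proof.
move=> cA UA ne; split.
  move=> h; apply: h; first by move=> y [].
    by move=> y Uy; apply: U_K (proj1 cA) UA Uy.
  exact: K_CFG.
by move=> Kx W WA UW cW; exact: K_sub_W cA WA UW cW Kx.
Qed.
End C.
Section D.
Context {disp : Order.disp_t} {B : ctbDistrLatticeType disp} {X Y : Type}.
Variable Hc : complete_BA (B := B).

Lemma ext (AX : X -> Prop) (dX : X -> X -> B) (AY : Y -> Prop) (dY : Y -> Y -> B)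
  (U : X -> Prop) (V : Y -> Prop) (f : X -> Y) :
  CFG AX dX -> CFG AY dY -> (forall x, U x -> AX x) -> (exists x, U x) ->
  (forall y, V y -> AY y) -> maps_into f U V -> contractive dX dY f U ->
  exists g : X -> Y,
    (forall x, Kc AX dX U x -> Kc AY dY V (g x)) /\
    (forall x, U x -> g x = f x) /\
    (forall x y, Kc AX dX U x -> Kc AX dX U y -> dY (g x) (g y) <= dX x y) /\
    (forall g' : X -> Y, (forall x, Kc AX dX U x -> AY (g' x)) ->
       (forall x, U x -> g' x = f x) ->
       (forall x y, Kc AX dX U x -> Kc AX dX U y -> dY (g' x) (g' y) <= dX x y) ->
       forall x, Kc AX dX U x -> g' x = g x).
Proof.
move=> cX cY UA [u0 Uu0] VA fUV fc.
have bmX := proj1 cX; have bmY := proj1 cY.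
have gex x : exists y, Kc AX dX U x ->
    AY y /\ forall u, U u -> ~` dX x u <= ~` dY y (f u).
  case: (classic (Kc AX dX U x)) => Kx; last by exists (f u0).
  case: Kx => Ax Kx.
  have [y [Ay Hy]] := glue Hc (P := U) (c := fun u => ~` dX x u) (x := f) cY
     (fun u Uu => VA _ (fUV _ Uu))
     (fun u v Uu Uv => av_le (av_tri (y := x) bmX (UA _ Uu) Ax (UA _ Uv)
        (le_av_meet _ (eq_ind _ (fun z => ~` dX x u <= ~` z) (lexx _) _
            (bm_sym bmX Ax (UA _ Uu))))
        (av_meetr _ (lexx _))) (fc _ _ Uu Uv)) Kx.
  by exists y.
pose g x := proj1_sig (constructive_indefinite_description _ (gex x)).
have gP x : Kc AX dX U x -> AY (g x) /\ forall u, U u -> ~` dX x u <= ~` dY (g x) (f u).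
  by rewrite /g; case: (constructive_indefinite_description _ _).
have UK x : U x -> Kc AX dX U x by move=> Ux; exact: U_K bmX UA Ux.
exists g; split; [|split; [|split]].
- move=> x Kx; have [Ay Hy] := gP x Kx; split => // t ht.
  apply: (proj2 Kx) => u Uu; exact: le_trans (Hy u Uu) (ht _ (fUV _ Uu)).
- move=> x Ux; have [Ay Hy] := gP x (UK x Ux).
  apply: (bm_eq bmY Ay (VA _ (fUV _ Ux))); apply: av_bot_eq.
  rewrite -(bm_zero bmX (UA _ Ux)); exact: Hy x Ux.
- move=> x y Kx Ky.
  have [Agx Hx] := gP x Kx; have [Agy Hy] := gP y Ky.
  have Ax := proj1 Kx; have Ay := proj1 Ky.
  apply: le_of_av; apply: (proj2 Kx) => u Uu.
  rewrite meetC avI; apply/dis_le.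
  apply: (proj2 Ky) => v Vv; rewrite avI.
  set a := _ `&` _.
  have a1 : a <= ~` dX x u by rewrite /a; apply: av_meetr; apply: le_av_meet.
  have a2 : a <= ~` dX x y by rewrite /a; apply: av_meetr; apply: av_meetr.
  have a3 : a <= ~` dX y v by rewrite /a; apply: le_av_meet.
  have Au := UA _ Uu; have Av := UA _ Vv.
  have Afu := VA _ (fUV _ Uu); have Afv := VA _ (fUV _ Vv).
  apply: (av_tri (y := f v) bmY Agx Afv Agy).
    apply: (av_tri (y := f u) bmY Agx Afu Afv).
      exact: le_trans a1 (Hx u Uu).
    apply: av_le _ (fc _ _ Uu Vv).
    apply: (av_tri (y := y) bmX Au Ay Av) => //.
    apply: (av_tri (y := x) bmX Au Ax Ay) => //.
    by rewrite (bm_sym bmX Au Ax).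
  rewrite (bm_sym bmY Afv Agy); exact: le_trans a3 (Hy v Vv).
- move=> g' hA hf hc x Kx.
  have [Agx Hx] := gP x Kx.
  apply: (bm_eq bmY (hA x Kx) Agx); apply: (proj2 Kx) => u Uu.
  have Afu := VA _ (fUV _ Uu).
  apply: (av_tri (y := f u) bmY (hA x Kx) Afu Agx).
    rewrite -(hf u Uu); apply: av_le (lexx _) _; exact: hc x u Kx (UK u Uu).
  rewrite (bm_sym bmY Afu Agx); exact: Hx.
Qed.
End D.

Theorem theorem4p3 (disp : Order.disp_t) (B : ctbDistrLatticeType disp)
  (X Y : Type) (AX : X -> Prop) (dX : X -> X -> B)
  (AY : Y -> Prop) (dY : Y -> Y -> B)
  (U : X -> Prop) (V : Y -> Prop) (f : X -> Y) :
  complete_BA (B := B) ->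
  CFG AX dX -> CFG AY dY ->
  (forall x, U x -> AX x) -> (exists x, U x) ->
  (forall y, V y -> AY y) -> (exists y, V y) ->
  maps_into f U V -> contractive dX dY f U ->
  exists g : X -> Y,
    (maps_into g (Conv AX dX U) (Conv AY dY V) /\
     (forall x, U x -> g x = f x) /\
     contractive dX dY g (Conv AX dX U)) /\
    (forall g' : X -> Y,
       maps_into g' (Conv AX dX U) (Conv AY dY V) ->
       (forall x, U x -> g' x = f x) ->
       contractive dX dY g' (Conv AX dX U) ->
       forall x, Conv AX dX U x -> g' x = g x) /\
    (isometry dX dY f U V ->
       isometry dX dY g (Conv AX dX U) (Conv AY dY V)).
Proof.
move=> Hc cX cY UA Une VA Vne fUV fc.
have CX x := Conv_iff Hc x cX UA Une.
have CY y := Conv_iff Hc y cY VA Vne.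
have [g [gK [gf [gc gu]]]] := ext Hc cX cY UA Une VA fUV fc.
have gmap : maps_into g (Conv AX dX U) (Conv AY dY V).
  by move=> x /CX /gK /CY.
have gcon : contractive dX dY g (Conv AX dX U).
  by move=> x y /CX Kx /CX Ky; exact: gc.
exists g; split; [split => // | split].
  move=> g' hm hf hc x /CX Kx; apply: gu => //.
  - by move=> z /CX /hm /CY [].
  - by move=> z w /CX Kz /CX Kw; apply: hc.
case=> [_ [finj [fsurj fd]]].
have [u0 Uu0] := Une.
have fiex v : exists u, V v -> U u /\ f u = v.
  case: (classic (V v)) => Vv; last by exists u0.
  by have [u [Uu e]] := fsurj v Vv; exists u.
pose fi v := proj1_sig (constructive_indefinite_description _ (fiex v)).
have fiP v : V v -> U (fi v) /\ f (fi v) = v.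
  by rewrite /fi; case: (constructive_indefinite_description _ _).
have fic : contractive dY dX fi V.
  move=> v w Vv Ww.
  have [Uv ev] := fiP v Vv; have [Uw ew] := fiP w Ww.
  by rewrite -fd // ev ew.
have [h [hK [hf [hc _]]]] := ext Hc cY cX VA Vne UA (fun v Vv => proj1 (fiP v Vv)) fic.
have [g0 [_ [_ [_ g0u]]]] := ext Hc cX cX UA Une UA (fun x Ux => Ux)
  (fun x y _ _ => lexx (dX x y)).
have hg x : Kc AX dX U x -> h (g x) = x.
  move=> Kx.
  have e1 : h (g x) = g0 x.
    apply: (g0u (fun z => h (g z))) => //.
    + by move=> z Kz; exact: proj1 (hK _ (gK _ Kz)).
    + move=> u Uu /=; rewrite gf // hf; last exact: fUV.
      have [Ufi e] := fiP _ (fUV _ Uu); exact: finj Ufi Uu e.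
    + by move=> z w Kz Kw; exact: le_trans (hc _ _ (gK _ Kz) (gK _ Kw)) (gc _ _ Kz Kw).
  have e2 : x = g0 x.
    apply: (g0u (fun z => z) _ _ _ x Kx).
    - by move=> z [].
    - by [].
    - by move=> z w _ _; exact: lexx.
  by rewrite e1 -e2.
have [g1 [_ [_ [_ g1u]]]] := ext Hc cY cY VA Vne VA (fun x Ux => Ux)
  (fun x y _ _ => lexx (dY x y)).
have gh v : Kc AY dY V v -> g (h v) = v.
  move=> Kv.
  have e1 : g (h v) = g1 v.
    apply: (g1u (fun z => g (h z))) => //.
    + by move=> z Kz; exact: proj1 (gK _ (hK _ Kz)).
    + move=> w Vw /=; rewrite hf // gf; last exact: (proj1 (fiP w Vw)).
      exact: proj2 (fiP w Vw).
    + by move=> z w Kz Kw; exact: le_trans (gc _ _ (hK _ Kz) (hK _ Kw)) (hc _ _ Kz Kw).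
  have e2 : v = g1 v.
    apply: (g1u (fun z => z) _ _ _ v Kv).
    - by move=> z [].
    - by [].
    - by move=> z w _ _; exact: lexx.
  by rewrite e1 -e2.
split => //; split; [|split].
- by move=> x y /CX Kx /CX Ky e; rewrite -(hg x Kx) -(hg y Ky) e.
- move=> v /CY Kv; exists (h v); split; last exact: gh.
  by apply/CX; exact: hK.
- move=> x y /CX Kx /CX Ky; apply: le_anti; rewrite gc //=.
  apply: le_trans (_ : dX x y <= dX (h (g x)) (h (g y))) _; first by rewrite !hg.
  exact: hc (gK _ Kx) (gK _ Ky).
Qed.
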